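(* Let $(G,H,\mathcal{L})$ be a cut-and-project scheme with injective $\star$-map. Let $W\subseteq H$ and let $\Gamma\subseteq G$ satisfy $\Lambda_{W^\circ}\subseteq\Gamma\subseteq\Lambda_{\overline{W}}$. Then there exists $W'\subseteq H$ with $\Gamma=\Lambda_{W'}$ such that $W'$ has each of the properties precompactness, non-empty interior, topological regularity and measure-theoretic regularity which $W$ has. If additionally $G$ is $\sigma$-compact and $W$ is precompact and (Borel) measurable, then $W'$ is precompact and measurable.
   Context: A cut-and-project scheme $(G,H,\mathcal{L})$ consists of locally compact abelian groups $G,H$ and a discrete cocompact subgroup $\mathcal{L}\subseteq G\times H$ such that $\pi^G|_{\mathcal{L}}$ is injective and $\pi^H(\mathcal{L})$ is dense in $H$. Let $L=\pi^G(\mathcal{L})$; the $\star$-map $L\to H$ is $x^\star=\pi^H((\pi^G|_{\mathcal{L}})^{-1}(x))$. For $W\subseteq H$, $\Lambda_W=\{x\in L: x^\star\in W\}$. Precompact: $\overline W$ compact; topologically regular: $\overline W=\overline{W^\circ}$; measure-theoretically regular: $\partial W=\overline W\setminus W^\circ$ has Haar measure zero. *)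

(* Defs.v *)
From HB Require Import structures.
From mathcomp Require Import all_boot all_order all_algebra.
From mathcomp Require Import all_classical all_reals all_analysis.
Set Implicit Arguments. Unset Strict Implicit. Unset Printing Implicit Defensive.
Import Order.TTheory GRing.Theory Num.Theory.
Local Open Scope classical_set_scope.
Local Open Scope ring_scope.

Definition LCA (G : topologicalZmodType) : Prop :=
  hausdorff_space G /\
  (forall x : G, exists K : set G, compact K /\ nbhs x K).

Definition sigma_compact_space (G : topologicalType) : Prop :=
  exists K : nat -> set G, (forall n, compact (K n)) /\ \bigcup_n K n = [set: G].

Definition cut_and_project_scheme (G H : topologicalZmodType)
  (L : set (G * H)) : Prop :=
  LCA G /\ LCA H /\
   (L (0, 0) /\ (forall p q, L p -> L q -> L (p.1 - q.1, p.2 - q.2))) /\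
   (forall p, L p -> exists U : set (G * H), [/\ open U, U p & U `&` L = [set p]]) /\
   (exists K : set (G * H), compact K /\
      forall z : G * H, exists k l, [/\ K k, L l & z = (k.1 + l.1, k.2 + l.2)]) /\
   (forall p q, L p -> L q -> p.1 = q.1 -> p = q) /\
   closure [set p.2 | p in L] = [set: H].

(** Injectivity of the star-map L -> H, x |-> x^star. Since pi^G|_L is
    injective, (x, x^star) is the unique point of L above x. *)
Definition star_injective (G H : topologicalZmodType) (L : set (G * H)) : Prop :=
  forall p q, L p -> L q -> p.2 = q.2 -> p.1 = q.1.

Definition model_set (G H : topologicalZmodType) (L : set (G * H)) (W : set H)
  : set G := [set x | exists h, L (x, h) /\ W h].

Definition precompact_set (H : topologicalType) (W : set H) : Prop :=
  compact (closure W).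

Definition topologically_regular (H : topologicalType) (W : set H) : Prop :=
  closure W = closure (interior W).

Definition borel_set (H : topologicalType) (A : set H) : Prop :=
  smallest (sigma_algebra setT) open A.

Definition haar_measure (R : realType) (H : topologicalZmodType)
  (mu : set H -> \bar R) : Prop :=
  mu set0 = 0%E /\
      (forall A, borel_set A -> (0 <= mu A)%E) /\
      (forall F : nat -> set H, (forall n, borel_set (F n)) -> trivIset setT F ->
         (fun n => \sum_(i < n) mu (F i))%E @ \oo --> mu (\bigcup_n F n)) /\
      (forall (x : H) A, borel_set A -> mu [set x + a | a in A] = mu A) /\
      (forall K, compact K -> (mu K < +oo)%E) /\
      (forall U, open U -> U !=set0 -> (0 < mu U)%E) /\
      (forall A, borel_set A ->
         mu A = ereal_inf [set mu U | U in [set U | open U /\ A `<=` U]]) /\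
      (forall U, open U ->
         mu U = ereal_sup [set mu K | K in [set K | compact K /\ K `<=` U]]).

Definition measure_regular (R : realType) (H : topologicalType)
  (mu : set H -> \bar R) (W : set H) : Prop :=
  mu (closure W `\` interior W) = 0%E.

(* Main.v *)
Require Import Defs.
From HB Require Import structures.
From mathcomp Require Import all_boot all_order all_algebra.
From mathcomp Require Import all_classical all_reals all_analysis finmap.
Import Order.TTheory GRing.Theory Num.Theory.
Local Open Scope classical_set_scope.
Local Open Scope ring_scope.

Lemma nbhs_prodP {U V : topologicalType} (z : U*V) (A : set (U*V)) :
  nbhs z A -> exists P Q, [/\ nbhs z.1 P, nbhs z.2 Q & P `*` Q `<=` A].
Proof. by move=> [[P Q] /= [nP nQ] sPQ]; exists P, Q. Qed.

Lemma nbhs_prodI {U V : topologicalType} (z : U*V) P Q :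
  nbhs z.1 P -> nbhs z.2 Q -> nbhs z (P `*` Q).
Proof. by move=> nP nQ; exists (P, Q). Qed.

Section TZ.
Variable T : topologicalZmodType.

Lemma nbhs_sub_half (A : set T) : nbhs 0 A ->
  exists N, nbhs 0 N /\ forall x y, N x -> N y -> A (x - y).
Proof.
move=> nA.
have : nbhs ((0 : T), (0 : T)) [set p : T * T | A (p.1 - p.2)].
  have := @sub_continuous T (0, 0); move=> /(_ A); rewrite /= subrr; apply; exact: nA.
move=> /nbhs_prodP [P [Q [nP nQ sPQ]]].
exists (P `&` Q); split; first exact: filterI.
by move=> x y [Px _] [_ Qy]; apply: (sPQ (x, y)).
Qed.

Lemma nbhs_translate (N : set T) (c : T) : nbhs 0 N -> nbhs c [set a | N (a - c)].
Proof.
move=> nN.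
have : nbhs (c, c) [set p : T * T | N (p.1 - p.2)].
  have := @sub_continuous T (c, c); move=> /(_ N); rewrite /= subrr; apply; exact: nN.
move=> /nbhs_prodP [P [Q [nP nQ sPQ]]].
apply: filterS nP => a Pa; apply: (sPQ (a, c)); split => //.
exact: nbhs_singleton nQ.
Qed.
End TZ.
Section Borel.
Variable T : topologicalType.

Lemma borel_sa : sigma_algebra setT (@borel_set T).
Proof. exact: smallest_sigma_algebra. Qed.

Lemma borel_open (A : set T) : open A -> borel_set A.
Proof. by move=> oA; apply: sub_sigma_algebra. Qed.

Lemma borel_C (A : set T) : borel_set A -> borel_set (~` A).
Proof. by case: borel_sa => _ hC _ /hC; rewrite setTD. Qed.

Lemma borel_closed (A : set T) : closed A -> borel_set A.
Proof. by move=> cA; rewrite -[A]setCK; apply: borel_C; apply: borel_open; apply: closed_openC. Qed.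

Lemma borel_bigcup (F : (set T)^nat) : (forall n, borel_set (F n)) -> borel_set (\bigcup_n F n).
Proof. by case: borel_sa => _ _; apply. Qed.

Lemma borel_U (A B : set T) : borel_set A -> borel_set B -> borel_set (A `|` B).
Proof.
move=> hA hB.
have -> : A `|` B = \bigcup_n (if n is 0%N then A else B).
  apply/seteqP; split=> x.
    by case=> h; [exists 0%N | exists 1%N].
  by case=> -[|n] _ h; [left|right].
by apply: borel_bigcup => -[|n].
Qed.
End Borel.
Section X. Variables G H : topologicalZmodType.
Definition GH := (G*H)%type.
HB.instance Definition _ := Topological.on GH.
HB.instance Definition _ := isPointed.Build GH (0,0).
Lemma cc (M : set (G*H)) : compact M -> @cover_compact (G*H)%type M.
Proof. move=> cM. have : @cover_compact GH M by rewrite -compact_cover. by []. Qed.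
End X.

Lemma lattice_compact_finite (G H : topologicalZmodType) (L : set (G*H)) (M : set (G*H)) :
  (forall p q, L p -> L q -> L (p.1 - q.1, p.2 - q.2)) ->
  (exists U : set (G*H), [/\ open U, U (0,0) & U `&` L = [set (0,0)]]) ->
  compact M -> finite_set (L `&` M).
Proof.
move=> Lsub [U [oU U0 UL]] cM.
have /nbhs_prodP [A [B [nA nB sAB]]] : nbhs ((0:G),(0:H)) U.
  by apply: open_nbhs_nbhs; split.
have [NG [nNG hNG]] := @nbhs_sub_half G A nA.
have [NH [nNH hNH]] := @nbhs_sub_half H B nB.
pose O (z : G*H) := interior [set w : G*H | NG (w.1 - z.1) /\ NH (w.2 - z.2)].
have Oz z : O z z.
  rewrite /O /interior /=.
  have := @nbhs_prodI G H z _ _ (@nbhs_translate G NG z.1 nNG) (@nbhs_translate H NH z.2 nNH).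
  apply: filterS.
  by move=> w [].
have {}cM := @cc G H M cM.
have [D' sD' cov] := cM (G*H)%type M O (fun z _ => open_interior _)
  (fun z Mz => ex_intro2 M (fun i => O i z) z Mz (Oz z)).
have sLM : L `&` M `<=` \bigcup_(i in [set` D']) (L `&` O i).
  by move=> p [Lp Mp]; have [i Di Oip] := cov p Mp; exists i.
apply: (sub_finite_set sLM).
apply: bigcup_finite; first exact: finite_fset.
move=> i _.
have sub1 : forall p q, (L `&` O i) p -> (L `&` O i) q -> p = q.
  move=> p q [Lp /interior_subset [gp hp]] [Lq /interior_subset [gq hq]].
  have h1 := hNG _ _ gp gq; have h2 := hNH _ _ hp hq.
  rewrite opprB addrA subrK in h1; rewrite opprB addrA subrK in h2.
  have : (U `&` L) (p.1 - q.1, p.2 - q.2) by split; [apply: sAB; split | apply: Lsub].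
  rewrite UL => -[] /eqP; rewrite subr_eq0 => /eqP e1 /eqP; rewrite subr_eq0 => /eqP e2.
  by case: p q e1 e2 {gp hp gq hq h1 h2 Lp Lq} => a b [c d] /= -> ->.
have [[p Pp]|np] := pselect ((L `&` O i) !=set0).
  apply: (@sub_finite_set _ _ [set p]); last exact: finite_set1.
  by move=> q Pq; exact: sub1 Pq Pp.
apply: (@sub_finite_set _ _ set0); last exact: finite_set0.
by move=> q Pq; apply: np; exists q.
Qed.

Theorem proposition2p4 (R : realType) (G H : topologicalZmodType)
  (L : set (G * H)) (W : set H) (Gamma : set G) :
  cut_and_project_scheme L ->
  star_injective L ->
  model_set L (interior W) `<=` Gamma ->
  Gamma `<=` model_set L (closure W) ->
  exists W' : set H,
    [/\ Gamma = model_set L W',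
         precompact_set W -> precompact_set W',
         interior W !=set0 -> interior W' !=set0,
         topologically_regular W -> topologically_regular W' &
         forall mu : set H -> \bar R, haar_measure mu ->
           measure_regular mu W -> measure_regular mu W'] /\
    (sigma_compact_space G -> precompact_set W -> borel_set W ->
       precompact_set W' /\ borel_set W').
Proof.
move=> [_ [[hausH _] [[L00 Lsub] [Ldisc [_ [Linj _]]]]]] sinj sub1 sub2.
pose S := [set h | exists y, L (y, h) /\ Gamma y].
pose W' := interior W `|` S.
have hW1 : interior W `<=` W' by move=> x hx; left.
have hW2 : W' `<=` closure W.
  move=> h [/interior_subset/subset_closure //|[y [Lyh Gy]]].
  have [h' [Lyh' cWh']] := sub2 y Gy.
  by have := Linj (y, h) (y, h') Lyh Lyh' erefl => -[->].
have int_sub : interior W `<=` interior W'.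
  by rewrite -open_subsetE //; exact: open_interior.
have ccW : closure (closure W) = closure W.
  by rewrite -(closure_id _).1 //; exact: closed_closure.
have cl_sub : closure W' `<=` closure W.
  by rewrite -[X in _ `<=` X]ccW; exact: closureS.
have prec : precompact_set W -> precompact_set W'.
  rewrite /precompact_set => cW; exact: (subclosed_compact (@closed_closure H W') cW cl_sub).
exists W'; split; last first.
  move=> [K [cK covK]] cW _; split; first exact: prec.
  apply: borel_U; first by apply: borel_open; exact: open_interior.
  have -> : S = \bigcup_n [set h | exists y, [/\ K n y, L (y, h) & Gamma y]].
    apply/seteqP; split.
      move=> h [y [Lyh Gy]].
      have : [set: G] y by [].
      by rewrite -covK => -[n _ Kny]; exists n => //; exists y.
    by move=> h [n _ [y [_ Lyh Gy]]]; exists y.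
  apply: borel_bigcup => n; apply: borel_closed.
  apply: (accessible_finite_set_closed.1 (hausdorff_accessible hausH)).
  apply: (@sub_finite_set _ _ (snd @` (L `&` (K n `*` closure W)))).
    move=> h [y [Kny Lyh Gy]].
    have [h' [Lyh' cWh']] := sub2 y Gy.
    have := Linj (y, h) (y, h') Lyh Lyh' erefl => -[e].
    by exists (y, h) => //; split => //; split => //=; rewrite e.
  apply: finite_image; apply: lattice_compact_finite.
  - by move=> p q; exact: Lsub.
  - exact: Ldisc.
  - exact: compact_setX (cK n) cW.
split.
- apply/seteqP; split.
    move=> x Gx; have [h [Lxh _]] := sub2 x Gx.
    by exists h; split => //; right; exists x.
  move=> x [h [Lxh [Wh|[y [Lyh Gy]]]]]; first by apply: sub1; exists h.
  by have /= -> := sinj (x, h) (y, h) Lxh Lyh erefl.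
- exact: prec.
- by move=> [x hx]; exists x; exact: int_sub.
- rewrite /topologically_regular => eW; apply/seteqP; split.
    apply: subset_trans cl_sub _; rewrite eW; exact: closureS int_sub.
  apply: closureS; exact: interior_subset.
- move=> mu [_ [nonneg [_ [_ [_ [_ [outer _]]]]]]] mW.
  rewrite /measure_regular in mW *.
  have bb X : borel_set (closure X `\` interior X).
    apply: borel_closed; apply: closedI; first exact: closed_closure.
    by rewrite closedC; exact: open_interior.
  have bsub : closure W' `\` interior W' `<=` closure W `\` interior W.
    by move=> x [cx nix]; split; [exact: cl_sub | move=> iW; apply: nix; exact: int_sub].
  apply/eqP; rewrite eq_le; apply/andP; split; last exact: nonneg.
  apply: (@le_trans _ _ (mu (closure W `\` interior W))); last by rewrite mW.
  rewrite (outer _ (bb _ W')) (outer _ (bb _ W)).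
  apply: le_ereal_inf => _ [U [oU sU] <-]; exists U => //; split => //.
  exact: subset_trans bsub sU.
Qed.
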